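(* For every integer $k\ge 2$, the complete graph $K_{2k}$ has a quasi-majority neighbor sum distinguishing $3$-edge-coloring in which at least $k-1$ vertices are each incident to at most $k-1$ edges of color $2$.
   Context: A $3$-edge-coloring of $G$ is any map $c:E(G)\to\{1,2,3\}$ (adjacent edges may share colors). It induces $\sigma_c(v)=\sum_{u\in N(v)}c(vu)$. The coloring is neighbor sum distinguishing if $\sigma_c(u)\ne\sigma_c(v)$ for every edge $uv$, and quasi-majority if every vertex $v$ is incident to at most $\lceil d(v)/2\rceil$ edges of each single color. *)

(* Defs.v *)
From mathcomp Require Import all_boot.
Set Implicit Arguments. Unset Strict Implicit. Unset Printing Implicit Defensive.

(* The complete graph K_n on vertex set 'I_n: every pair u <> v is an edge.
   A 3-edge-colouring is represented by a symmetric function c on ordered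
   pairs of distinct vertices, with c u v = c v u in {1,2,3}; c u u is
   irrelevant (loops are not edges). *)
Definition edge_coloring3 (n : nat) (c : 'I_n -> 'I_n -> nat) : Prop :=
  forall u v : 'I_n, u != v -> c u v = c v u /\ 1 <= c u v <= 3.

Definition sigma (n : nat) (c : 'I_n -> 'I_n -> nat) (v : 'I_n) : nat :=
  \sum_(u : 'I_n | u != v) c v u.

Definition col_deg (n : nat) (c : 'I_n -> 'I_n -> nat) (v : 'I_n) (i : nat) : nat :=
  #|[set u : 'I_n | (u != v) && (c v u == i)]|.

Definition degK (n : nat) : nat := n.-1.

Definition nsd (n : nat) (c : 'I_n -> 'I_n -> nat) : Prop :=
  forall u v : 'I_n, u != v -> sigma c u <> sigma c v.

Definition quasi_majority (n : nat) (c : 'I_n -> 'I_n -> nat) : Prop :=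
  forall (v : 'I_n) (i : nat), col_deg c v i <= uphalf (degK n).

(* Main.v *)
Require Import Defs.
From mathcomp Require Import all_boot zify.
Set Implicit Arguments. Unset Strict Implicit. Unset Printing Implicit Defensive.

Definition inD (p m : nat) : bool :=
  if m./2 == p.-1 then odd m && ~~ odd p else odd (p - m./2).
Definition cb (m w : nat) : nat :=
  match m, w with
  | 0, 1 => 2 | 0, 2 => 1 | 0, 3 => 2 | 1, 2 => 2 | 1, 3 => 3 | _, _ => 1 end.
Definition c0 (m w : nat) : nat :=
  if w < 4 then cb m w else if m./2 == w./2 then 2
  else if inD w./2 m then 2 else if odd w then 3 else 1.
Definition col (u v : nat) : nat := c0 (minn u v) (maxn u v).

Lemma colC u v : col u v = col v u.
Proof. by rewrite /col minnC maxnC. Qed.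

Lemma col_range u v : 1 <= col u v <= 3.
Proof.
rewrite /col /c0; case: ifP => _.
  by case: (minn u v) => [|[|[|m]]]; case: (maxn u v) => [|[|[|[|w]]]].
by case: ifP => //; case: ifP => //; case: ifP.
Qed.

Definition cnt L v i := \sum_(0 <= u < L.*2) (u != v) * (col v u == i).
Definition sg L v := \sum_(0 <= u < L.*2) (u != v) * col v u.

Lemma sg_cnt L v : sg L v = cnt L v 1 + 2 * cnt L v 2 + 3 * cnt L v 3.
Proof.
rewrite /sg /cnt !big_distrr -!big_split /=; apply: eq_bigr => u _.
have := col_range v u; case: (col v u) => [|[|[|[|c]]]] //= _; lia.
Qed.

Lemma cnt0 L v i : i != 1 -> i != 2 -> i != 3 -> cnt L v i = 0.
Proof.
move=> h1 h2 h3; rewrite /cnt big1_seq // => u _.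
have := col_range v u; case: (col v u) => [|[|[|[|c]]]] //= _;
  rewrite ?(eq_sym 1) ?(eq_sym 2) ?(eq_sym 3) ?(negbTE h1) ?(negbTE h2) ?(negbTE h3); lia.
Qed.

Lemma sumstep F L v : v < L.*2 ->
  \sum_(0 <= u < (L.+1).*2) (u != v) * F u =
  \sum_(0 <= u < L.*2) (u != v) * F u + F L.*2 + F (L.*2).+1.
Proof.
move=> hv; rewrite doubleS !big_nat_recr //= ?gtn_eqF //; last by rewrite ltnW.
by rewrite !mul1n.
Qed.

Lemma sumx F L :
  \sum_(0 <= u < (L.+1).*2) (u != L.*2) * F u =
  \sum_(0 <= u < L.*2) F u + F (L.*2).+1.
Proof.
rewrite doubleS !big_nat_recr //= eqxx gtn_eqF // mul0n addn0 mul1n.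
rewrite (eq_big_nat _ _ (F2 := F)); first reflexivity. by move=> u /andP[_ hu]; rewrite ltn_eqF //= mul1n.
Qed.

Lemma sumy F L :
  \sum_(0 <= u < (L.+1).*2) (u != (L.*2).+1) * F u =
  \sum_(0 <= u < L.*2) F u + F (L.*2).
Proof.
rewrite doubleS !big_nat_recr //= eqxx ltn_eqF // mul0n addn0 mul1n.
rewrite (eq_big_nat _ _ (F2 := F)); first reflexivity.
by move=> u /andP[_ hu]; rewrite ltn_eqF //= ?mul1n // ltnW.
Qed.

Lemma halfS2 L : ((L.*2).+1)./2 = L.
Proof. by rewrite -[(L.*2).+1]/(true + L.*2) half_bit_double. Qed.

Lemma col_x L v : 2 <= L -> v < L.*2 -> col v L.*2 = if inD L v then 2 else 1.
Proof.
move=> hL hv; rewrite /col (minn_idPl (ltnW hv)) (maxn_idPr (ltnW hv)) /c0.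
rewrite ltnNge (_ : 4 <= L.*2) /=; last by lia.
rewrite doubleK odd_double ltn_eqF ?ltn_half_double //.
all: by case: (inD L v).
Qed.

Lemma col_y L v : 2 <= L -> v < L.*2 -> col v (L.*2).+1 = if inD L v then 2 else 3.
Proof.
move=> hL hv; have hv' : v <= (L.*2).+1 by lia.
rewrite /col (minn_idPl hv') (maxn_idPr hv') /c0.
rewrite ltnNge (_ : 4 <= (L.*2).+1) /=; last by lia.
rewrite ?uphalf_double ?halfS2 odd_double ltn_eqF ?ltn_half_double //.
all: by case: (inD L v).
Qed.

Lemma col_xy L : 2 <= L -> col L.*2 (L.*2).+1 = 2.
Proof.
move=> hL; rewrite /col (minn_idPl (leqnSn _)) (maxn_idPr (leqnSn _)) /c0.
rewrite ltnNge (_ : 4 <= (L.*2).+1) /= ?uphalf_double ?halfS2 ?doubleK ?eqxx //; lia.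
Qed.

Lemma sum_pairs (f : nat -> nat) n :
  \sum_(0 <= u < n.*2) f u./2 = 2 * \sum_(0 <= q < n) f q.
Proof.
elim: n => [|n IH]; first by rewrite !big_geq.
rewrite doubleS !big_nat_recr //= IH ?uphalf_double ?halfS2 doubleK; lia.
Qed.

Lemma sumodd n : \sum_(0 <= q < n) odd (n - q) = uphalf n.
Proof.
elim: n => [|n IH]; first by rewrite big_geq.
rewrite big_nat_recl // subn0.
rewrite (eq_big_nat _ _ (F2 := fun q => nat_of_bool (odd (n - q)))); last first.
  by move=> i _; rewrite subSS.
rewrite IH !uphalf_half /= ?uphalf_half; case: (odd n) => /=; lia.
Qed.

Lemma sumodd1 n : \sum_(0 <= q < n) odd (n.+1 - q) = n./2.
Proof.
elim: n => [|n IH]; first by rewrite big_geq.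
rewrite big_nat_recl // subn0.
rewrite (eq_big_nat _ _ (F2 := fun q => nat_of_bool (odd (n.+1 - q)))); last first.
  by move=> i _; rewrite subSS.
rewrite IH /= uphalf_half; case: (odd n) => /=; lia.
Qed.

Lemma ND n : \sum_(0 <= u < (n.+1).*2) inD n.+1 u = n.
Proof.
rewrite doubleS !big_nat_recr //=.
rewrite (eq_big_nat _ _ (F2 := fun u => nat_of_bool (odd (n.+1 - u./2)))); last first.
  move=> u /andP[_ hu]; rewrite /inD /= ifN //.
  by rewrite neq_ltn ltn_half_double hu.
rewrite (sum_pairs (fun q => nat_of_bool (odd (n.+1 - q)))) sumodd1 /inD /= ?uphalf_double ?halfS2 doubleK eqxx odd_double /=.
rewrite negbK; have := odd_double_half n; case: (odd n) => /=; lia.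
Qed.

Lemma NDc n : \sum_(0 <= u < (n.+1).*2) ~~ inD n.+1 u = n.+2.
Proof.
have h : \sum_(0 <= u < (n.+1).*2) inD n.+1 u + \sum_(0 <= u < (n.+1).*2) ~~ inD n.+1 u
   = (n.+1).*2.
  rewrite -big_split /= (eq_big_nat _ _ (F2 := fun => 1)); last by move=> i _; case: inD.
  by rewrite sum_nat_const_nat subn0 muln1.
move: h; rewrite ND; lia.
Qed.
Definition P L := forall v, v < L.*2 ->
  [/\ cnt L v 1 <= L, cnt L v 3 <= L, cnt L v 2 + odd (L - v./2) <= L,
      3 * L <= sg L v + 2 <= 5 * L &
      forall u, u < L.*2 -> u != v -> sg L u != sg L v].

Lemma base : P 2.
Proof.
have E : forall v, v < 4 -> sg 2 v = nth 0 [:: 5; 7; 4; 6] v.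
  by move=> v; case: v => [|[|[|[|v]]]] //= _; rewrite /sg unlock.
move=> v hv4.
split.
- by move: hv4; case: v => [|[|[|[|v]]]] //= _; rewrite /cnt unlock.
- by move: hv4; case: v => [|[|[|[|v]]]] //= _; rewrite /cnt unlock.
- by move: hv4; case: v => [|[|[|[|v]]]] //= _; rewrite /cnt unlock.
- by rewrite E //; move: hv4; case: v => [|[|[|[|v]]]].
- move=> u hu; rewrite !E //; move: hv4 hu.
  by case: v => [|[|[|[|v]]]] //; case: u => [|[|[|[|u]]]].
Qed.

Lemma inD_odd L v : v < L.*2 -> inD L v -> odd (L - v./2).
Proof.
move=> hv; rewrite /inD; case: ifP => [/eqP h _|_] //.
have -> : L - v./2 = 1 by lia.
by [].
Qed.

Lemma step n : 1 <= n -> P n.+1 -> P n.+2.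
Proof.
set L := n.+1 => hn IH.
have hL : 2 <= L by rewrite /L ltnS.
have Hold : forall v i, v < L.*2 ->
    cnt L.+1 v i = cnt L v i + (col v L.*2 == i) + (col v L.*2.+1 == i).
  by move=> v i hv; rewrite /cnt (sumstep (fun u => nat_of_bool (col v u == i))).
have Sold : forall v, v < L.*2 -> sg L.+1 v = sg L v + 4.
  move=> v hv; rewrite /sg (sumstep (col v)) // col_x // col_y //.
  by case: (inD L v); rewrite -addnA.
have Cx : forall i, cnt L.+1 L.*2 i =
    \sum_(0 <= u < L.*2) ((if inD L u then 2 else 1) == i) + (2 == i).
  move=> i; rewrite /cnt (sumx (fun u => nat_of_bool (col L.*2 u == i))) col_xy //.
  rewrite (eq_big_nat _ _ (F2 := fun u => nat_of_bool ((if inD L u then 2 else 1) == i))) //.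
  by move=> u /andP[_ hu]; rewrite colC col_x.
have Cy : forall i, cnt L.+1 L.*2.+1 i =
    \sum_(0 <= u < L.*2) ((if inD L u then 2 else 3) == i) + (2 == i).
  move=> i; rewrite /cnt (sumy (fun u => nat_of_bool (col L.*2.+1 u == i))) colC col_xy //.
  rewrite (eq_big_nat _ _ (F2 := fun u => nat_of_bool ((if inD L u then 2 else 3) == i))) //.
  by move=> u /andP[_ hu]; rewrite colC col_y.
have Cx1 : cnt L.+1 L.*2 1 = L.+1.
  rewrite Cx addn0 -[RHS](NDc n); apply: eq_big_nat => u _; by case: inD.
have Cx2 : cnt L.+1 L.*2 2 = L.
  rewrite Cx (eq_big_nat _ _ (F2 := fun u => nat_of_bool (inD n.+1 u))) ?ND ?addn1 //.
  by move=> u _; case: inD.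
have Cx3 : cnt L.+1 L.*2 3 = 0.
  rewrite Cx addn0 big1_seq // => u _; by case: inD.
have Cy3 : cnt L.+1 L.*2.+1 3 = L.+1.
  rewrite Cy addn0 -[RHS](NDc n); apply: eq_big_nat => u _; by case: inD.
have Cy2 : cnt L.+1 L.*2.+1 2 = L.
  rewrite Cy (eq_big_nat _ _ (F2 := fun u => nat_of_bool (inD n.+1 u))) ?ND ?addn1 //.
  by move=> u _; case: inD.
have Cy1 : cnt L.+1 L.*2.+1 1 = 0.
  rewrite Cy addn0 big1_seq // => u _; by case: inD.
have SG : forall u, u < L.+1.*2 ->
   [\/ u < L.*2 /\ sg L.+1 u = sg L u + 4, u = L.*2 /\ sg L.+1 u = 3 * L + 1
     | u = L.*2.+1 /\ sg L.+1 u = 5 * L + 3].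
  move=> u hu.
  have : u < L.*2 \/ u = L.*2 \/ u = L.*2.+1 by rewrite doubleS in hu; lia.
  case=> [h|[->|->]].
  - by constructor 1; split => //; apply: Sold.
  - by constructor 2; split => //; rewrite sg_cnt Cx1 Cx2 Cx3; lia.
  - by constructor 3; split => //; rewrite sg_cnt Cy1 Cy2 Cy3; lia.
have B : forall u, u < L.*2 -> 3 * L <= sg L u + 2 <= 5 * L.
  by move=> u hu; have [_ _ _ ] := IH u hu.
move=> v hv; split.
- case: (SG v hv) => [[hvo _]|[-> _]|[-> _]]; last 2 first.
  + by rewrite Cx1.
  + by rewrite Cy1.
  have [c1 _ _ _ _] := IH v hvo.
  rewrite Hold // col_x // col_y //; case: inD => /=; lia.
- case: (SG v hv) => [[hvo _]|[-> _]|[-> _]]; last 2 first.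
  + by rewrite Cx3.
  + by rewrite Cy3.
  have [_ c3 _ _ _] := IH v hvo.
  rewrite Hold // col_x // col_y //; case: inD => /=; lia.
- case: (SG v hv) => [[hvo _]|[-> _]|[-> _]]; last 2 first.
  + rewrite Cx2 doubleK subSnn /=; lia.
  + rewrite Cy2 ?uphalf_double ?halfS2 subSnn /=; lia.
  have [_ _ c2 _ _] := IH v hvo.
  have hle : v./2 <= L by move: hvo; rewrite -ltn_half_double => /ltnW.
  rewrite Hold // col_x // col_y // subSn //=.
  case hD: inD => /=.
    move: c2; rewrite (inD_odd hvo hD) /=; lia.
  move: c2; case: odd => /=; lia.
- case: (SG v hv) => [[hvo ->]|[_ ->]|[_ ->]]; last 2 first.
  + apply/andP; split; lia.
  + apply/andP; split; lia.
  have := B v hvo; move/andP => [h1 h2]; apply/andP; split; lia.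
- move=> u hu huv.
  case: (SG v hv) => [[hvo ev]|[ev1 ev]|[ev1 ev]];
  case: (SG u hu) => [[huo eu]|[eu1 eu]|[eu1 eu]]; rewrite ev eu; subst.
  + have [_ _ _ _ hd] := IH v hvo.
    have := hd u huo huv; apply: contra => /eqP h; apply/eqP; lia.
  + have := B v hvo; move/andP => [h1 h2]; apply/eqP; lia.
  + have := B v hvo; move/andP => [h1 h2]; apply/eqP; lia.
  + have := B u huo; move/andP => [h1 h2]; apply/eqP; lia.
  + by rewrite eqxx in huv.
  + apply/eqP; lia.
  + have := B u huo; move/andP => [h1 h2]; apply/eqP; lia.
  + apply/eqP; lia.
  + by rewrite eqxx in huv.
Qed.

Lemma invP n : P n.+2.
Proof. elim: n => [|n IH]; [exact: base | exact: step]. Qed.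

Theorem mainTheorem19 (k : nat) (hk : 2 <= k) :
  exists c : 'I_(2 * k) -> 'I_(2 * k) -> nat,
    [/\ edge_coloring3 c, quasi_majority c, nsd c &
        k.-1 <= #|[set v : 'I_(2 * k) | col_deg c v 2 <= k.-1]| ].
Proof.
exists (fun u v => col u v).
have HP : P k by case: k hk => [|[|n]] // _; exact: invP.
have Hv : forall v : 'I_(2 * k), (v : nat) < k.*2 by move=> v; rewrite -mul2n.
have Esg : forall v : 'I_(2*k), sigma (fun u v => col u v) v = sg k v.
  move=> v; rewrite /sigma /sg -mul2n big_mkord big_mkcond /=; apply: eq_bigr => u _.
  by have -> : ((u:nat) != v) = (u != v) by []; case: (u != v) => /=; rewrite ?mul1n.
have Ecnt : forall (v : 'I_(2*k)) i, col_deg (fun u v => col u v) v i = cnt k v i.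
  move=> v i; rewrite /col_deg /cnt -mul2n big_mkord -sum1_card big_mkcond /=.
  apply: eq_bigr => u _; rewrite inE.
  by case: (u != v); case: (col v u == i).
split.
- by move=> u v _; split; [exact: colC | exact: col_range].
- move=> v i; rewrite Ecnt /degK.
  have -> : uphalf (2 * k).-1 = k.
    have -> : (2 * k).-1 = (k.-1).*2.+1 by lia.
    by rewrite /= doubleK; lia.
  have [c1 c3 c2 _ _] := HP v (Hv v).
  case: (i =P 1) => [->//|/eqP h1].
  case: (i =P 2) => [->|/eqP h2]; first lia.
  case: (i =P 3) => [->//|/eqP h3].
  by rewrite cnt0.
- move=> u v huv; rewrite !Esg.
  have [_ _ _ _ hd] := HP v (Hv v).
  by apply/eqP; apply: hd (Hv u) huv.
- rewrite -sum1_card big_mkcond /=.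
  apply: (@leq_trans (\sum_(v < 2 * k) odd (k - v./2))).
    rewrite -(big_mkord xpredT (fun v => nat_of_bool (odd (k - v./2)))) mul2n.
    rewrite (sum_pairs (fun q => nat_of_bool (odd (k - q)))) sumodd uphalf_half.
    have := odd_double_half k; case: (odd k) => /=; lia.
  apply: leq_sum => v _; rewrite inE Ecnt.
  have [_ _ c2 _ _] := HP v (Hv v).
  case: odd c2 => /= c2; last by []. rewrite ifT //; lia.
Qed.
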